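(* For $n=4$: $\mathbb{O}_{4,0}\simeq\mathbb{O}_{2,2}$ and $\mathbb{O}_{3,1}\simeq\mathbb{O}_{1,3}$ (as graded algebras).
   Context: $\mathbb{Z}_2=\{0,1\}$. For $p+q=n\ge3$, $\mathbb{O}_{p,q}$ is the real algebra with basis $\{u_x: x\in\mathbb{Z}_2^n\}$ and product $u_x\cdot u_y=(-1)^{f(x,y)}u_{x+y}$, where $f(x,y)=\sum_{1\le i<j<k\le n}(x_ix_jy_k+x_iy_jx_k+y_ix_jx_k)+\sum_{1\le i\le j\le n}x_iy_j+\sum_{1\le i\le p}x_iy_i$. A graded isomorphism is an algebra isomorphism sending each homogeneous element (scalar multiple of some $u_x$) to a homogeneous element. *)

(* Defs.v *)
From HB Require Import structures.
From mathcomp Require Import all_boot all_order all_algebra.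
From mathcomp Require Import reals.
Set Implicit Arguments. Unset Strict Implicit. Unset Printing Implicit Defensive.
Import Order.TTheory GRing.Theory Num.Theory.
Local Open Scope ring_scope.

Notation Z2n n := {ffun 'I_n -> bool}.
Definition z2add n (x y : Z2n n) : Z2n n := [ffun i => x i (+) y i].

(* The twisting function f(x,y) for O_{p,q}, n = p + q, computed as a natural
   number (its parity is what matters). Indices 1..n are 'I_n (0-based). *)
Definition ftwist (p q : nat) (x y : Z2n (p + q)) : nat :=
  let b (z : Z2n (p + q)) i := nat_of_bool (z i) in
  (\sum_(i < p + q) \sum_(j < p + q) \sum_(k < p + q | (i < j < k)%N)
     (b x i * b x j * b y k + b x i * b y j * b x k + b y i * b x j * b x k)
   + \sum_(i < p + q) \sum_(j < p + q | (i <= j)%N) b x i * b y j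
   + \sum_(i < p + q | (i < p)%N) b x i * b y i)%N.

Notation Oelt R p q := {ffun Z2n (p + q) -> R}.
Section Oalg.
Variable R : realType.

(* Elements of O_{p,q}: coordinate functions on the basis {u_x : x in Z_2^n}. *)
Local Notation Oelt p q := {ffun Z2n (p + q) -> R}.

Definition ubasis p q (x : Z2n (p + q)) : Oelt p q := [ffun z => (z == x)%:R].

(* product: u_x . u_y = (-1)^{f(x,y)} u_{x+y}, extended bilinearly *)
Definition Oscale p q (c : R) (a : Oelt p q) : Oelt p q := [ffun z => c * a z].

Definition Omul p q (a b : Oelt p q) : Oelt p q :=
  [ffun z => \sum_(x : Z2n (p + q)) \sum_(y : Z2n (p + q) | z2add x y == z)
     (-1) ^+ ftwist x y * a x * b y].

Definition homogeneous p q (a : Oelt p q) : Prop :=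
  exists (c : R) (x : Z2n (p + q)), a = Oscale c (ubasis x).

Definition graded_iso p q p' q' (phi : Oelt p q -> Oelt p' q') : Prop :=
  [/\ bijective phi,
      (forall a b, phi (a + b) = phi a + phi b),
      (forall (c : R) a, phi (Oscale c a) = Oscale c (phi a)),
      (forall a b, phi (Omul a b) = Omul (phi a) (phi b))
    & (forall a, homogeneous a -> homogeneous (phi a))].

Definition graded_isomorphic p q p' q' : Prop :=
  exists phi : Oelt p q -> Oelt p' q', graded_iso phi.
End Oalg.

(* Main.v *)
Require Import Defs.
From mathcomp Require Import all_boot all_order all_algebra reals.
From mathcomp Require Import ring.
Set Implicit Arguments. Unset Strict Implicit. Unset Printing Implicit Defensive.
Import Order.TTheory GRing.Theory Num.Theory.
Local Open Scope ring_scope.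

Section G.
Variables (R : realType) (p q p' q' : nat).
Variables (A : Z2n (p + q) -> Z2n (p' + q')) (B : Z2n (p' + q') -> Z2n (p + q))
  (s : Z2n (p + q) -> bool).
Hypotheses (AB : cancel A B) (BA : cancel B A)
  (Aadd : forall x y, A (z2add x y) = z2add (A x) (A y))
  (Htw : forall x y, odd (ftwist x y) (+) s x (+) s y
                     = s (z2add x y) (+) odd (ftwist (A x) (A y))).

Let sg (b : bool) : R := (-1) ^+ b.

Definition phi (a : Oelt R p q) : Oelt R p' q' := [ffun z => sg (s (B z)) * a (B z)].
Definition psi (a : Oelt R p' q') : Oelt R p q := [ffun x => sg (s x) * a (A x)].

Lemma sgK b : sg b * sg b = 1.
Proof. by case: b; rewrite /sg /= ?expr0 ?expr1 ?mulr1 ?mulrNN ?mulr1. Qed.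

Lemma eqAB w z : (A w == z) = (w == B z).
Proof. by apply/eqP/eqP => [<-|->]; rewrite ?AB ?BA. Qed.

Lemma giso : graded_isomorphic R p q p' q'.
Proof.
exists phi; split.
- exists psi => a; apply/ffunP => z; rewrite !ffunE ?AB ?BA mulrA sgK mul1r //.
- by move=> a b; apply/ffunP => z; rewrite !ffunE mulrDr.
- by move=> c a; apply/ffunP => z; rewrite !ffunE mulrCA.
- move=> a b; apply/ffunP => z; rewrite !ffunE.
  rewrite (reindex A (onW_bij _ (Bijective AB BA))) /= mulr_sumr.
  apply: eq_bigr => x _.
  rewrite (reindex A (onW_bij _ (Bijective AB BA))) /= mulr_sumr.
  rewrite (eq_bigl (fun y => z2add x y == B z)); last first.
    by move=> y; rewrite -Aadd eqAB.
  apply: eq_bigr => y /eqP E; rewrite !ffunE !AB -E.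
  have H : s (z2add x y) = odd (ftwist x y) (+) s x (+) s y (+) odd (ftwist (A x) (A y)).
    by rewrite Htw addbK.
  rewrite H -[(-1) ^+ ftwist x y]signr_odd -[(-1) ^+ ftwist (A x) (A y)]signr_odd /sg.
  move: (odd (ftwist x y)) (odd (ftwist (A x) (A y))) (s x) (s y) => b1 b2 b3 b4.
  by case: b1; case: b2; case: b3; case: b4; rewrite /= ?expr0 ?expr1; ring.
- move=> a [c [x ->]]; exists (c * sg (s x)), (A x); apply/ffunP => z.
  rewrite !ffunE; have [->|ne] := eqVneq z (A x).
    by rewrite AB eqxx; ring.
  have -> : (B z == x) = false.
    by apply/negbTE; apply: contra ne => /eqP <-; rewrite BA.
  by rewrite /=; ring.
Qed.
End G.

Definition o0 : 'I_4 := @Ordinal 4 0 isT.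
Definition o1 : 'I_4 := @Ordinal 4 1 isT.
Definition o2 : 'I_4 := @Ordinal 4 2 isT.
Definition o3 : 'I_4 := @Ordinal 4 3 isT.
Lemma ord4P (P : 'I_4 -> Prop) : P o0 -> P o1 -> P o2 -> P o3 -> forall i, P i.
Proof.
move=> H0 H1 H2 H3 [[|[|[|[|m]]]] Hi] //.
- by rewrite (bool_irrelevance Hi (isT : 0 < 4)%N).
- by rewrite (bool_irrelevance Hi (isT : 1 < 4)%N).
- by rewrite (bool_irrelevance Hi (isT : 2 < 4)%N).
- by rewrite (bool_irrelevance Hi (isT : 3 < 4)%N).
Qed.
Lemma sum4 (F : 'I_4 -> nat) (P : pred 'I_4) : (\sum_(i < 4 | P i) F i =
  (if P o0 then F o0 else 0) + (if P o1 then F o1 else 0) + (if P o2 then F o2 else 0) + (if P o3 then F o3 else 0))%N.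
Proof.
rewrite big_mkcond !big_ord_recl big_ord0 /= addn0 !addnA.
by congr (_ + _ + _ + _); congr (if P _ then F _ else _); apply: val_inj.
Qed.
Lemma sum4' (F : 'I_4 -> nat) : (\sum_(i < 4) F i = F o0 + F o1 + F o2 + F o3)%N.
Proof. by rewrite (sum4 F xpredT). Qed.

Definition B2 (f : bool -> bool) := f true && f false.
Lemma B2P f : B2 f -> forall b, f b.
Proof. by case/andP=> ? ? []. Qed.
Lemma bool8 (P : bool -> bool -> bool -> bool -> bool -> bool -> bool -> bool -> bool) :
  B2 (fun a0 => B2 (fun a1 => B2 (fun a2 => B2 (fun a3 => B2 (fun b0 => B2 (fun b1 => B2 (fun b2 => B2 (fun b3 => P a0 a1 a2 a3 b0 b1 b2 b3)))))))) ->
  forall a0 a1 a2 a3 b0 b1 b2 b3, P a0 a1 a2 a3 b0 b1 b2 b3.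
Proof.
move=> H a0 a1 a2 a3 b0 b1 b2 b3.
move: H; move/B2P/(_ a0)/B2P/(_ a1)/B2P/(_ a2)/B2P/(_ a3)/B2P/(_ b0)/B2P/(_ b1)/B2P/(_ b2)/B2P/(_ b3).
done.
Qed.
Definition code (x : Z2n 4) : nat := 8 * x o0 + 4 * x o1 + 2 * x o2 + x o3.
Definition dot (r : seq bool) (x : Z2n 4) := (nth false r 0 && x o0) (+) (nth false r 1 && x o1) (+) (nth false r 2 && x o2) (+) (nth false r 3 && x o3).
Definition linA (M : seq (seq bool)) (x : Z2n 4) : Z2n 4 :=
  [ffun i : 'I_4 => dot (nth [::] M i) x].
Definition tab (t : seq bool) (x : Z2n 4) : bool := nth false t (code x).
Definition M1 := [:: [:: false;false;false;true]; [:: true;true;true;false]; [:: false;false;true;false]; [:: false;true;false;false]].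
Definition N1 := [:: [:: false;true;true;true]; [:: false;false;false;true]; [:: false;false;true;false]; [:: true;false;false;false]].
Definition S1 := [:: false;true;true;false;true;false;true;false;true;true;false;false;false;false;false;false].


Definition M2 := [:: [:: true;true;true;false]; [:: false;false;false;true]; [:: false;false;true;false]; [:: false;true;false;false]].
Definition N2 := [:: [:: true;false;true;true]; [:: false;false;false;true]; [:: false;false;true;false]; [:: false;true;false;false]].
Definition S2 := [:: false;false;false;true;false;true;true;true;true;true;true;false;true;false;false;false].

Lemma linA_add M (x y : Z2n 4) : linA M (z2add x y) = z2add (linA M x) (linA M y).
Proof.
apply/ffunP => i; rewrite !ffunE /dot !ffunE.
move: (nth false (nth [::] M i) 0) (nth false (nth [::] M i) 1) (nth false (nth [::] M i) 2) (nth false (nth [::] M i) 3).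
by move: (x o0) (x o1) (x o2) (x o3) (y o0) (y o1) (y o2) (y o3); do 12 case.
Qed.
Lemma c1 : cancel (linA M1) (linA N1).
Proof.
move=> x; apply/ffunP; apply: ord4P; rewrite !ffunE /dot /= !ffunE /dot /=;
 by case: (x o0); case: (x o1); case: (x o2); case: (x o3).
Qed.
Lemma c1b : cancel (linA N1) (linA M1).
Proof.
move=> x; apply/ffunP; apply: ord4P; rewrite !ffunE /dot /= !ffunE /dot /=;
 by case: (x o0); case: (x o1); case: (x o2); case: (x o3).
Qed.
Lemma c2 : cancel (linA M2) (linA N2).
Proof.
move=> x; apply/ffunP; apply: ord4P; rewrite !ffunE /dot /= !ffunE /dot /=;
 by case: (x o0); case: (x o1); case: (x o2); case: (x o3).
Qed.
Lemma c2b : cancel (linA N2) (linA M2).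
Proof.
move=> x; apply/ffunP; apply: ord4P; rewrite !ffunE /dot /= !ffunE /dot /=;
 by case: (x o0); case: (x o1); case: (x o2); case: (x o3).
Qed.
Lemma t1 (x y : Z2n (4 + 0)) :
   odd (ftwist x y) (+) tab S1 x (+) tab S1 y = tab S1 (z2add x y) (+) odd (@ftwist 2 2 (linA M1 x) (linA M1 y)).
Proof.
rewrite /ftwist; cbv beta zeta. rewrite !sum4 ?sum4'.
rewrite /tab /code !ffunE /dot.
move: (x o0) (x o1) (x o2) (x o3) (y o0) (y o1) (y o2) (y o3).
move=> a0 a1 a2 a3 b0 b1 b2 b3; apply/eqP.
move: a0 a1 a2 a3 b0 b1 b2 b3; apply: bool8. vm_compute. reflexivity.
Qed.

Lemma t2 (x y : Z2n (3 + 1)) :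
   odd (ftwist x y) (+) tab S2 x (+) tab S2 y = tab S2 (z2add x y) (+) odd (@ftwist 1 3 (linA M2 x) (linA M2 y)).
Proof.
rewrite /ftwist; cbv beta zeta. rewrite !sum4 ?sum4'.
rewrite /tab /code !ffunE /dot.
move: (x o0) (x o1) (x o2) (x o3) (y o0) (y o1) (y o2) (y o3).
move=> a0 a1 a2 a3 b0 b1 b2 b3; apply/eqP.
move: a0 a1 a2 a3 b0 b1 b2 b3; apply: bool8. vm_compute. reflexivity.
Qed.

Theorem mainTheorem5 (R : realType) :
  graded_isomorphic R 4 0 2 2 /\ graded_isomorphic R 3 1 1 3.
Proof.
split.
- exact: (@giso R 4 0 2 2 (linA M1) (linA N1) (tab S1) c1 c1b (@linA_add M1) t1).
- exact: (@giso R 3 1 1 3 (linA M2) (linA N2) (tab S2) c2 c2b (@linA_add M2) t2).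
Qed.
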